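(* Fix a level $\ell<K$ and a node $y\in\mathcal Z_\ell$, and write $y_l=\mathrm{left}(y)$, $y_r=\mathrm{right}(y)$. Let $\tilde{\boldsymbol\theta}^0\in\mathbb R^{\mathcal Z^*}$ and $\tilde{\boldsymbol\theta}=\tilde{\boldsymbol\theta}^0+\boldsymbol\delta$, with $\boldsymbol\mu^0=\tilde{\boldsymbol p}(\tilde{\boldsymbol\theta}^0)$ and $\boldsymbol\mu=\tilde{\boldsymbol p}(\tilde{\boldsymbol\theta})$, be such that: (i) $\boldsymbol\mu^0$ is coherent among all levels $k\ge\ell$; (ii) $\delta_z=0$ for every $z$ with $I_z\not\subseteq I_y$; (iii) $\boldsymbol\mu$ is coherent among all levels $k>\ell$. Let $$t=\frac{b_\ell}{B_{\ell-1}}\log\Bigl(\frac{1-\mu_y}{\mu_y}\cdot\frac{\mu_{y_l}+\mu_{y_r}}{1-\mu_{y_l}-\mu_{y_r}}\Bigr)$$ and $\tilde{\boldsymbol\theta}'=\tilde{\boldsymbol\theta}+t\,\mathbf a_y$, where $\mathbf a_y$ is the column of $\mathbf A$ indexed by $y$. Then $\boldsymbol\mu'=\tilde{\boldsymbol p}(\tilde{\boldsymbol\theta}')$ is coherent among all levels $k\ge\ell$.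
   Context: Fix an integer $K\ge1$. Let $T^*$ be the complete binary tree of depth $K$ whose nodes are intervals: the root (level $0$) has $I_{\mathit{root}}=[0,1)$, and each node $z$ at level $k<K$ with $I_z=[\alpha_z,\beta_z)$ has children $\mathrm{left}(z)$, $\mathrm{right}(z)$ at level $k+1$ with intervals $[\alpha_z,\frac{\alpha_z+\beta_z}2)$ and $[\frac{\alpha_z+\beta_z}2,\beta_z)$. Let $\mathcal Z^*$ be its node set, $\mathcal Z_k$ the nodes at level $k$, $\mathrm{level}(z)$ the level of $z$, and $\mathcal Y^*=\mathcal Z^*\setminus\mathcal Z_K$. Fix liquidity parameters $b_k>0$ ($k=0,\dots,K$) and set $B_\ell=\sum_{k=\ell+1}^K b_k$ for $\ell=-1,0,\dots,K$ (so $B_{\ell-1}=B_\ell+b_\ell$). For $\tilde{\boldsymbol\theta}\in\mathbb R^{\mathcal Z^*}$, $\tilde p_z(\tilde{\boldsymbol\theta})=e^{\tilde\theta_z/b_k}/\sum_{z'\in\mathcal Z_k}e^{\tilde\theta_{z'}/b_k}$ for $z\in\mathcal Z_k$. The constraint matrix $\mathbf A\in\mathbb R^{\mathcal Z^*\times\mathcal Y^*}$ has entries $A_{zy}=B_{\mathrm{level}(z)}$ if $z=y$, $-b_{\mathrm{level}(z)}$ if $I_z\subsetneq I_y$, and $0$ otherwise. A vector $\boldsymbol\mu\in\mathbb R^{\mathcal Z^*}$ is coherent among a set $L$ of levels if for all $k,m\in L$ with $k<m$ and all $z\in\mathcal Z_k$, $\mu_z=\sum_{u\in\mathcal Z_m:\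 I_u\subseteq I_z}\mu_u$. *)

(* Defs.v *)
From HB Require Import structures.
From mathcomp Require Import all_boot all_order all_algebra.
From mathcomp Require Import all_classical all_reals.
From mathcomp.analysis Require Import sequences exp.
Set Implicit Arguments. Unset Strict Implicit. Unset Printing Implicit Defensive.
Import Order.TTheory GRing.Theory Num.Theory.
Local Open Scope classical_set_scope.
Local Open Scope ring_scope.

(* Nodes of the complete binary tree T* of depth K are encoded as pairs
   (k, j) with k <= K the level and j < 2^k the position within the level.
   The node (k, j) has interval I_(k,j) = [j / 2^k, (j+1) / 2^k); its
   children are (k+1, 2j) (left) and (k+1, 2j+1) (right), whose intervals
   are exactly the left and right halves of I_(k,j).  Vectors in
   R^{Z*} are functions nat -> nat -> R; only the values at nodes matter. *)

Section Tree.
Variable R : realType.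

Definition Iv (k j : nat) : set R :=
  [set x : R | (j%:R / 2 ^+ k <= x) && (x < j.+1%:R / 2 ^+ k)].

Definition Bl (K : nat) (b : nat -> R) (l : nat) : R :=
  \sum_(l.+1 <= k < K.+1) b k.
Definition Blm1 (K : nat) (b : nat -> R) (l : nat) : R :=
  \sum_(l <= k < K.+1) b k.

Definition ptilde (b : nat -> R) (theta : nat -> nat -> R) (k j : nat) : R :=
  expR (theta k j / b k) / \sum_(i < 2 ^ k) expR (theta k i / b k).

Definition Amat (K : nat) (b : nat -> R) (k j m i : nat) : R :=
  if (k == m) && (j == i) then Bl K b k
  else if `[< Iv k j `<=` Iv m i /\ Iv k j <> Iv m i >] then - b k
  else 0.

Definition coherent (K : nat) (L : nat -> Prop) (mu : nat -> nat -> R) : Prop :=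
  forall k m, L k -> L m -> (k < m)%N -> (m <= K)%N ->
  forall z, (z < 2 ^ k)%N ->
    mu k z = \sum_(u < 2 ^ m | `[< Iv m u `<=` Iv k z >]) mu m u.

End Tree.

(* Main.v *)
Require Import Defs.
From HB Require Import structures.
From mathcomp Require Import all_boot all_order all_algebra.
From mathcomp Require Import all_classical all_reals.
From mathcomp.analysis Require Import sequences exp.
From mathcomp Require Import zify ring lra.
Import Order.TTheory GRing.Theory Num.Theory.
Local Open Scope classical_set_scope.
Local Open Scope ring_scope.

Section Aux.
Context {R : realType}.

Lemma two_pow_gt0 (k : nat) : 0 < (2 : R) ^+ k.
Proof. by rewrite exprn_gt0. Qed.

Lemma rescale (a k N : nat) : (k <= N)%N ->
  a%:R / (2:R) ^+ k = (a * 2 ^ (N - k))%:R / 2 ^+ N.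
Proof.
move=> kN; rewrite -{2}(subnKC kN) exprD natrM natrX.
have h1 := two_pow_gt0 k; have h2 := two_pow_gt0 (N - k).
field; apply/andP; split; by rewrite gt_eqF.
Qed.

Lemma le_dy (a c N : nat) : (a%:R / (2:R) ^+ N <= c%:R / 2 ^+ N) = (a <= c)%N.
Proof. by rewrite ler_pM2r ?ler_nat // invr_gt0 two_pow_gt0. Qed.

Lemma lt_dy (a c N : nat) : (a%:R / (2:R) ^+ N < c%:R / 2 ^+ N) = (a < c)%N.
Proof. by rewrite ltr_pM2r ?ltr_nat // invr_gt0 two_pow_gt0. Qed.

Lemma Iv_sub (k j m i : nat) :
  (Iv k j `<=` (Iv m i : set R)) <-> ((m <= k)%N /\ (j %/ 2 ^ (k - m))%N = i).
Proof.
split.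
- move=> H.
  have Hx : Iv k j (j%:R / (2:R) ^+ k).
    by rewrite /Iv /= lexx /= lt_dy.
  have := H _ Hx; rewrite /Iv /= => /andP [h1 h2].
  case: (leqP m k) => mk.
  + split => //.
    move: h1 h2; rewrite (rescale i _ _ mk) (rescale i.+1 _ _ mk) le_dy lt_dy => h1 h2.
    have hd : (0 < 2 ^ (k - m))%N by rewrite expn_gt0.
    apply/eqP; rewrite eqn_leq; apply/andP; split.
    * by rewrite -ltnS ltn_divLR.
    * by rewrite leq_divRL.
  + exfalso.
    have km : (k <= m)%N by apply: ltnW.
    move: h1 h2; rewrite (rescale j _ _ km) le_dy lt_dy => h1 h2.
    have hi : i = (j * 2 ^ (m - k))%N by lia.
    have h2p : (2 <= 2 ^ (m - k))%N.
      have -> : (m - k = (m - k).-1.+1)%N by lia.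
      by rewrite expnS leq_pmulr // expn_gt0.
    have Hy : Iv k j (i.+1%:R / (2:R) ^+ m).
      rewrite /Iv /= (rescale j _ _ km) (rescale j.+1 _ _ km) le_dy lt_dy.
      apply/andP; split; first lia.
      rewrite hi mulSn. lia.
    have := H _ Hy; rewrite /Iv /= => /andP [_]; by rewrite ltxx.
- move=> [mk hji] x; rewrite /Iv /= => /andP [h1 h2].
  have hd : (0 < 2 ^ (k - m))%N by rewrite expn_gt0.
  apply/andP; split.
  + apply: le_trans h1; rewrite (rescale i _ _ mk) le_dy -hji; exact: leq_divM.
  + apply: (lt_le_trans h2); rewrite (rescale i.+1 _ _ mk) le_dy -hji; exact: ltn_ceil.
Qed.


Lemma Iv_subb (k m u z : nat) : (k <= m)%N ->
  `[< Iv m u `<=` (Iv k z : set R) >] = ((u %/ 2^(m-k))%N == z).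
Proof.
move=> km; apply/asboolP/eqP.
- by move/Iv_sub => [].
- by move=> h; apply/Iv_sub.
Qed.

Lemma Amat_eq K (b : nat -> R) k j l y : Amat K b k j l y =
  if (k == l) && (j == y) then Bl K b l
  else if (l < k)%N && ((j %/ 2^(k-l))%N == y) then - b k else 0.
Proof.
rewrite /Amat; case: ifP => [/andP[/eqP-> _] //|hne].
have -> : `[< Iv k j `<=` (Iv l y : set R) /\ (Iv k j : set R) <> Iv l y >] =
   (l < k)%N && ((j %/ 2^(k-l))%N == y).
  apply/asboolP/andP.
  - move=> [/Iv_sub [lk e] Hne]; split; last by apply/eqP.
    rewrite ltn_neqAle lk andbT; apply/negP => /eqP lk'.
    move: e hne; rewrite lk' subnn expn0 divn1 => ->; by rewrite !eqxx.
  - move=> [lk /eqP e]; split; first by apply/Iv_sub; split => //; apply: ltnW.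
    move=> Heq; have : Iv l y `<=` (Iv k j : set R) by rewrite Heq.
    move/Iv_sub => [kl _]; lia.
by [].
Qed.

Lemma sum_gt0_w n (P : pred 'I_n) (F : 'I_n -> R) i0 :
  (forall i, 0 < F i) -> P i0 -> 0 < \sum_(i < n | P i) F i.
Proof.
move=> hF hP; rewrite (bigD1 i0) //=.
have : 0 <= \sum_(i < n | P i && (i != i0)) F i by apply: sumr_ge0 => i _; apply: ltW.
have := hF i0; lra.
Qed.

Lemma E_gt0 (b : nat -> R) th k : 0 < \sum_(i < 2 ^ k) expR (th k i / b k).
Proof.
have hk : (0 < 2 ^ k)%N by rewrite expn_gt0.
have := @sum_gt0_w (2^k) xpredT (fun i : 'I_(2^k) => expR (th k i / b k)) (Ordinal hk).
by apply => // i; apply: expR_gt0.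
Qed.

Lemma pt_gt0 b th k j : 0 < ptilde b th k j :> R.
Proof. by rewrite /ptilde; apply: divr_gt0; [exact: expR_gt0 | exact: (E_gt0 b th k)]. Qed.

Lemma pt_sum1 b th k : \sum_(i < 2 ^ k) ptilde b th k i = 1 :> R.
Proof.
rewrite /ptilde -big_distrl /= divff //; have := E_gt0 b th k.
by move=> h; rewrite gt_eqF.
Qed.

Lemma pt_scale (b : nat -> R) th th' (c : nat -> R) k j :
  (forall i, th' k i = th k i + c i) ->
  ptilde b th' k j = ptilde b th k j * expR (c j / b k) /
     \sum_(i < 2 ^ k) ptilde b th k i * expR (c i / b k).
Proof.
move=> hth; rewrite /ptilde.
set E := \sum_(i < 2 ^ k) expR (th k i / b k).
have hE : E != 0 by rewrite gt_eqF //; exact: (E_gt0 b th k).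
have -> : \sum_(i < 2 ^ k) expR (th' k i / b k) =
   E * \sum_(i < 2 ^ k) expR (th k i / b k) / E * expR (c i / b k).
  rewrite big_distrr; apply: eq_bigr => i _ /=.
  rewrite hth mulrDl expRD; field; exact: hE.
rewrite hth mulrDl expRD.
have hS : \sum_(i < 2 ^ k) expR (th k i / b k) / E * expR (c i / b k) != 0.
  rewrite gt_eqF //; have hk : (0 < 2 ^ k)%N by rewrite expn_gt0.
  apply: (@sum_gt0_w _ xpredT _ (Ordinal hk)) => // i.
  apply: mulr_gt0; [apply: divr_gt0; [exact: expR_gt0|exact: (E_gt0 b th k)]|exact: expR_gt0].
field; rewrite hE hS; by [].
Qed.

Lemma part k m (F : nat -> R) : (k <= m)%N ->
  \sum_(u < 2 ^ m) F u =
  \sum_(j < 2 ^ k) \sum_(u < 2 ^ m | (u %/ 2^(m-k))%N == j) F u.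
Proof.
move=> km.
under [RHS]eq_bigr do rewrite big_mkcond.
rewrite exchange_big /=; apply: eq_bigr => u _.
have hu : (u %/ 2^(m-k) < 2 ^ k)%N.
  by rewrite ltn_divLR ?expn_gt0 // -expnD subnKC.
rewrite -big_mkcond /= (big_pred1 (Ordinal hu)) //.
Qed.

Lemma coh_sum (mu : nat -> nat -> R) k m (h : nat -> R) : (k <= m)%N ->
  (forall z, (z < 2 ^ k)%N ->
     mu k z = \sum_(u < 2 ^ m | (u %/ 2^(m-k))%N == z) mu m u) ->
  \sum_(j < 2 ^ k) h j * mu k j = \sum_(u < 2 ^ m) h (u %/ 2^(m-k))%N * mu m u.
Proof.
move=> km hc; rewrite (part _ _ (fun u => h (u %/ 2^(m-k))%N * mu m u) km); apply: eq_bigr => j _.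
rewrite hc // big_distrr /=; apply: eq_bigr => u /eqP ->; by [].
Qed.

Lemma sum_at n (F : nat -> R) y : (y < n)%N ->
  \sum_(i < n | (i : nat) == y) F i = F y.
Proof.
move=> hy; rewrite (big_pred1 (Ordinal hy)) //.
Qed.

Lemma split_at n (F : nat -> R) y : (y < n)%N ->
  \sum_(i < n) F i = F y + \sum_(i < n | (i : nat) != y) F i.
Proof.
move=> hy; rewrite (bigID (fun i : 'I_n => (i : nat) == y)) /= sum_at //.
Qed.

Lemma pair_sum l y (F : nat -> R) : (y < 2 ^ l)%N ->
  \sum_(j < 2 ^ l.+1 | (j %/ 2)%N == y) F j = F (2 * y)%N + F (2 * y).+1.
Proof.
move=> hy.
have h1 : ((2 * y).+1 < 2 ^ l.+1)%N by rewrite expnS; lia.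
have h0 : ((2 * y) < 2 ^ l.+1)%N by lia.
rewrite (bigD1 (Ordinal h0)) /=; last by apply/eqP; lia.
rewrite (bigD1 (Ordinal h1)) /=; last by apply/andP; split; [apply/eqP; lia | rewrite -val_eqE /=; apply/eqP; lia].
rewrite big1 ?addr0 // => j /andP [/andP [/eqP hj hj1] hj2].
exfalso; move: hj1 hj2; rewrite -!val_eqE /= => hj1 hj2; lia.
Qed.


Lemma coh_nat K (L : nat -> Prop) (mu : nat -> nat -> R) k m :
  coherent K L mu -> L k -> L m -> (k < m)%N -> (m <= K)%N ->
  forall z, (z < 2 ^ k)%N ->
  mu k z = \sum_(u < 2 ^ m | (u %/ 2^(m-k))%N == z) mu m u.
Proof.
move=> H Lk Lm km mK z zk; rewrite (H k m) //.
apply: eq_bigl => u; rewrite Iv_subb //; exact: ltnW.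
Qed.

Lemma other1 n y : (2 <= n)%N -> exists2 j, (j < n)%N & j != y.
Proof.
move=> hn; case: (eqVneq y 0%N) => [->|h]; [exists 1%N | exists 0%N] => //; lia.
Qed.

Lemma other2 n y : (3 <= n)%N -> exists2 j, (j < n)%N & (j %/ 2)%N != y.
Proof.
move=> hn; case: (eqVneq y 0%N) => [->|h]; [exists 2%N | exists 0%N] => //; try lia.
Qed.

End Aux.

Theorem lemma3 (R : realType) (K : nat) (b : nat -> R)
  (hb : forall k, (k <= K)%N -> 0 < b k)
  (l : nat) (hl : (l < K)%N) (y : nat) (hy : (y < 2 ^ l)%N)
  (theta0 delta : nat -> nat -> R) :
  let theta := fun k j => theta0 k j + delta k j in
  let mu0 := ptilde b theta0 in
  let mu := ptilde b theta in
  let yl := (2 * y)%N in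
  let yr := (2 * y).+1 in
  coherent K (fun k => (l <= k)%N) mu0 ->
  (forall k j, (k <= K)%N -> (j < 2 ^ k)%N -> ~ (Iv k j `<=` (Iv l y : set R)) ->
     delta k j = 0) ->
  coherent K (fun k => (l < k)%N) mu ->
  let t := b l / Blm1 K b l *
     ln ((1 - mu l y) / mu l y *
         ((mu l.+1 yl + mu l.+1 yr) / (1 - mu l.+1 yl - mu l.+1 yr))) in
  let theta' := fun k j => theta k j + t * Amat K b k j l y in
  coherent K (fun k => (l <= k)%N) (ptilde b theta').
Proof.
move=> theta mu0 mu yl yr H0 Hd H1 t theta' k m /= Lk Lm km mK z zk.
rewrite (eq_bigl (fun u : 'I_(2^m) => (u %/ 2^(m-k))%N == z)); last first.
  by move=> u; rewrite Iv_subb // ltnW.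
have hb0 : forall n, (n <= K)%N -> b n != 0 by move=> n hn; rewrite gt_eqF // hb.
pose hh := fun n j : nat => if (j %/ 2^(n-l))%N == y then expR (- t) else 1.
have FA : forall n j, (l < n)%N -> (n <= K)%N ->
    ptilde b theta' n j = mu n j * hh n j / \sum_(i < 2^n) mu n i * hh n i.
  move=> n j ln nK.
  have eg : forall i, expR (t * Amat K b n i l y / b n) = hh n i.
    move=> i; rewrite Amat_eq (gtn_eqF ln) /= ln /= /hh.
    case: ifP => _; last by rewrite mulr0 mul0r expR0.
    congr expR; field; exact: hb0.
  rewrite (pt_scale b theta theta' (fun i => t * Amat K b n i l y) n j) // eg.
  by under eq_bigr do rewrite eg.
have [lk | ek] : (l < k)%N \/ k = l by lia.
- have lm : (l < m)%N by apply: ltn_trans km.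
  have Hc := coh_nat _ _ _ _ _ H1 lk lm km mK.
  have hrel : forall u, hh m u = hh k (u %/ 2^(m-k))%N.
    move=> u; rewrite /hh -divnMA -expnD.
    by have -> : (m - k + (k - l) = m - l)%N by lia.
  have Nq : \sum_(i < 2^m) mu m i * hh m i = \sum_(i < 2^k) mu k i * hh k i.
    transitivity (\sum_(i < 2^m) hh k (i %/ 2^(m-k))%N * mu m i).
      by apply: eq_bigr => i _; rewrite hrel mulrC.
    rewrite -(coh_sum _ _ _ _ (ltnW km) Hc); apply: eq_bigr => i _; exact: mulrC.
  rewrite (FA k z) //; try lia.
  transitivity (\sum_(u < 2^m | (u %/ 2^(m-k))%N == z)
                  mu m u * hh k z / \sum_(i < 2^k) mu k i * hh k i).
    by rewrite (Hc z zk) -!mulr_suml.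
  apply: eq_bigr => u /eqP hu; rewrite FA // Nq hrel hu //.
- subst k.
  subst mu0 mu yl yr.
  have lm : (l < m)%N := km.
  have [l0 | lpos] := posnP l.
  + have sum1 : forall n (F : nat -> R), n = 1%N -> \sum_(i < n) F i = F 0%N.
      by move=> n F ->; rewrite big_ord1.
    have e1 := pt_sum1 b theta' l.
    rewrite l0 sum1 in e1; last by rewrite expn0.
    have z0 : z = 0%N by move: zk; rewrite l0 expn0; lia.
    rewrite z0 l0 e1 subn0 -{1}(pt_sum1 b theta' m).
    apply: eq_bigl => u; rewrite divn_small //.
  + pose c := fun n j => delta n j + t * Amat K b n j l y.
    have hth' : forall n i, theta' n i = theta0 n i + c n i.
      by move=> n i; rewrite /theta' /theta /c addrA.
    pose N0 := fun n => \sum_(i < 2^n) ptilde b theta0 n i * expR (c n i / b n).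
    have Fout : forall n j, (n <= K)%N -> (j < 2^n)%N ->
        ~~ ((l <= n)%N && ((j %/ 2^(n-l))%N == y)) ->
        ptilde b theta' n j = ptilde b theta0 n j / N0 n.
      move=> n j nK jn hj.
      have c0 : c n j = 0.
        rewrite /c Hd //; last by move/Iv_sub => [ln e]; move: hj; rewrite ln e eqxx.
        rewrite Amat_eq; case: ifP => [/andP [/eqP e1 /eqP e2] | _].
          by exfalso; move: hj; rewrite e1 e2 subnn expn0 divn1 leqnn eqxx.
        case: ifP => [/andP [ln /eqP e] |_].
          by exfalso; move: hj; rewrite (ltnW ln) e eqxx.
        by rewrite mulr0 add0r.
      by rewrite (pt_scale b theta0 theta' (c n) n j (hth' n)) c0 mul0r expR0 mulr1.
    have Pj : forall j, (j < 2^l)%N -> j != y ->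
        \sum_(u < 2^m | (u %/ 2^(m-l))%N == j) ptilde b theta' m u
          = ptilde b theta0 l j / N0 m.
      move=> j jl jy.
      transitivity (\sum_(u < 2^m | (u %/ 2^(m-l))%N == j) ptilde b theta0 m u / N0 m).
        apply: eq_bigr => u /eqP hu; rewrite Fout //; last by rewrite hu (negbTE jy) andbF.
      by rewrite -mulr_suml -(coh_nat _ _ _ _ _ H0 (leqnn l) (ltnW lm) km mK).
    have ClaimY : ptilde b theta' l y =
        \sum_(u < 2^m | (u %/ 2^(m-l))%N == y) ptilde b theta' m u.
      have Ay : Amat K b l y l y = Bl K b l by rewrite Amat_eq !eqxx.
      have Ai : forall i, i != y -> Amat K b l i l y = 0.
        by move=> i hi; rewrite Amat_eq eqxx (negbTE hi) ltnn.
      have eS := pt_sum1 b theta l; rewrite (split_at _ _ y hy) in eS.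
      have Nl : \sum_(i < 2^l) ptilde b theta l i * expR (t * Amat K b l i l y / b l)
          = ptilde b theta l y * expR (t * Bl K b l / b l) + (1 - ptilde b theta l y).
        rewrite (split_at _ (fun i => ptilde b theta l i * expR (t * Amat K b l i l y / b l)) y hy) /= Ay; congr (_ + _).
        transitivity (\sum_(i < 2^l | (i:nat) != y) ptilde b theta l i).
          by apply: eq_bigr => i hi; rewrite Ai // mulr0 mul0r expR0 mulr1.
        lra.
      rewrite (pt_scale b theta theta' (fun i => t * Amat K b l i l y) l y) // Nl Ay.
      pose S := \sum_(u < 2^m | (u %/ 2^(m-l))%N == y) ptilde b theta m u.
      have Nm : \sum_(i < 2^m) ptilde b theta m i * hh m i
          = S * expR (- t) + (1 - S).
        have eSm := pt_sum1 b theta m.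
        rewrite (bigID (fun u : 'I_(2^m) => (u %/ 2^(m-l))%N == y)) /= in eSm.
        rewrite (bigID (fun u : 'I_(2^m) => (u %/ 2^(m-l))%N == y)) /=.
        congr (_ + _).
          by rewrite /S mulr_suml; apply: eq_bigr => u hu; rewrite /hh hu.
        transitivity (\sum_(u < 2^m | ~~ ((u %/ 2^(m-l))%N == y)) ptilde b theta m u).
          by apply: eq_bigr => u hu; rewrite /hh (negbTE hu) mulr1.
        rewrite /S; lra.
      transitivity (\sum_(u < 2^m | (u %/ 2^(m-l))%N == y)
          ptilde b theta m u * expR (- t) / (S * expR (- t) + (1 - S))); last first.
        by apply: eq_bigr => u hu; rewrite FA // Nm /hh hu.
      rewrite -mulr_suml -mulr_suml -/S.
      have HS : S = ptilde b theta l.+1 (2 * y)%N + ptilde b theta l.+1 (2 * y).+1.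
        have Hc2 : forall z0, (z0 < 2^(l.+1))%N -> ptilde b theta l.+1 z0 =
            \sum_(u < 2^m | (u %/ 2^(m - l.+1))%N == z0) ptilde b theta m u.
          case: (ltnP l.+1 m) => hm.
            exact: (coh_nat _ _ _ _ _ H1 (ltnSn l) lm hm mK).
          have em : m = l.+1 by lia.
          move=> z0 hz0; rewrite em subnn expn0.
          rewrite (eq_bigl (fun u : 'I_(2^l.+1) => (u:nat) == z0)) ?sum_at // => u.
          by rewrite divn1.
        have e2 := coh_sum (ptilde b theta) l.+1 m
          (fun j => if (j %/ 2)%N == y then 1 else 0) lm Hc2.
        have L1 : \sum_(j < 2^l.+1) (if (j %/ 2)%N == y then 1 else 0) *
            ptilde b theta l.+1 j =
            ptilde b theta l.+1 (2 * y)%N + ptilde b theta l.+1 (2 * y).+1.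
          rewrite -(pair_sum l y (ptilde b theta l.+1) hy) [RHS]big_mkcond.
          by apply: eq_bigr => j _; case: ifP => _; rewrite ?mul1r ?mul0r.
        have L2 : \sum_(u < 2^m) (if ((u %/ 2^(m - l.+1)) %/ 2)%N == y then 1 else 0) *
            ptilde b theta m u = S.
          rewrite /S [RHS]big_mkcond; apply: eq_bigr => u _.
          rewrite -divnMA -expnSr.
          have -> : ((m - l.+1).+1 = m - l)%N by lia.
          by case: ifP => _; rewrite ?mul1r ?mul0r.
        by rewrite -L2 -L1 e2.
      rewrite HS.
      have hp : 0 < ptilde b theta l y by apply: pt_gt0.
      have h2l : (2 <= 2 ^ l)%N by rewrite -{1}(expn1 2) leq_pexp2l.
      have hp1 : 0 < 1 - ptilde b theta l y.
        have [j0 hj0 nj0] := other1 _ y h2l.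
        have : 0 < \sum_(i < 2^l | (i:nat) != y) ptilde b theta l i.
          by apply: (@sum_gt0_w _ _ _ _ (Ordinal hj0)) => // i; exact: pt_gt0.
        lra.
      have hS : 0 < ptilde b theta l.+1 (2 * y)%N + ptilde b theta l.+1 (2 * y).+1.
        by apply: addr_gt0; apply: pt_gt0.
      have hS1 : 0 < 1 - (ptilde b theta l.+1 (2 * y)%N + ptilde b theta l.+1 (2 * y).+1).
        have h3 : (3 <= 2 ^ l.+1)%N by rewrite expnS; lia.
        have [j1 hj1 nj1] := other2 _ y h3.
        have e3 := pt_sum1 b theta l.+1.
        rewrite (bigID (fun u : 'I_(2^l.+1) => (u %/ 2)%N == y)) /= pair_sum // in e3.
        have : 0 < \sum_(i < 2^l.+1 | ~~ ((i %/ 2)%N == y)) ptilde b theta l.+1 i.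
          by apply: (@sum_gt0_w _ _ _ _ (Ordinal hj1)) => // i; exact: pt_gt0.
        lra.
      have hbl : 0 < b l by apply: hb; apply: ltnW.
      have hBl : 0 <= Bl K b l.
        rewrite /Bl big_nat_cond; apply: sumr_ge0 => i /andP [/andP [_ hi] _].
        by apply: ltW; apply: hb; lia.
      have Blm1E : Blm1 K b l = b l + Bl K b l.
        by rewrite /Blm1 /Bl big_ltn //; lia.
      pose X := (1 - ptilde b theta l y) / ptilde b theta l y *
         ((ptilde b theta l.+1 (2 * y)%N + ptilde b theta l.+1 (2 * y).+1) /
          (1 - ptilde b theta l.+1 (2 * y)%N - ptilde b theta l.+1 (2 * y).+1)).
      have hX : 0 < X.
        rewrite /X; apply: mulr_gt0; apply: divr_gt0 => //; lra.
      have ees : expR (t * Bl K b l / b l) = X * expR (- t).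
        have eX : expR (ln X) = X by apply: lnK; rewrite posrE.
        rewrite -{1}eX -expRD; congr expR.
        rewrite /t -/X Blm1E; field.
        by apply/andP; split; rewrite gt_eqF //; lra.
      rewrite ees /X.
      field.
      have hE := expR_gt0 (- t).
      have q1 := mulr_gt0 hS hE.
      have q2 := mulr_gt0 (mulr_gt0 hp1 hS) hE.
      have q3 : 0 < (1 - ptilde b theta l y) *
         (1 - ptilde b theta l.+1 (2 * y)%N - ptilde b theta l.+1 (2 * y).+1).
        by apply: mulr_gt0 => //; lra.
      by apply/and4P; split; rewrite gt_eqF //; lra.
    have Ninv : (N0 l)^-1 = (N0 m)^-1.
      have e1 := pt_sum1 b theta' l; rewrite (split_at _ _ y hy) in e1.
      have W1 : \sum_(i < 2^l | (i:nat) != y) ptilde b theta' l i =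
          (\sum_(i < 2^l | (i:nat) != y) ptilde b theta0 l i) * (N0 l)^-1.
        rewrite mulr_suml; apply: eq_bigr => i hi; rewrite Fout //; first exact: ltnW.
        by rewrite leqnn subnn expn0 divn1 (negbTE hi).
      have e2 := pt_sum1 b theta' m.
      rewrite (part l m (ptilde b theta' m) (ltnW lm)) (split_at _ (fun j => \sum_(u < 2^m | (u %/ 2^(m-l))%N == j) ptilde b theta' m u) y hy) /= -ClaimY in e2.
      have W2 : \sum_(j < 2^l | (j:nat) != y)
            \sum_(u < 2^m | (u %/ 2^(m-l))%N == j) ptilde b theta' m u =
          (\sum_(i < 2^l | (i:nat) != y) ptilde b theta0 l i) * (N0 m)^-1.
        by rewrite mulr_suml; apply: eq_bigr => j hj; rewrite Pj.
      rewrite W1 in e1; rewrite W2 in e2.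
      have hW : \sum_(i < 2^l | (i:nat) != y) ptilde b theta0 l i != 0.
        have h2l : (2 <= 2 ^ l)%N by rewrite -{1}(expn1 2) leq_pexp2l.
        have [j0 hj0 nj0] := other1 _ y h2l.
        rewrite gt_eqF //; apply: (@sum_gt0_w _ _ _ _ (Ordinal hj0)) => // i.
        exact: pt_gt0.
      apply: (mulfI hW); apply: (addrI (ptilde b theta' l y)); by rewrite e1 e2.
    have [ezy | nzy] := eqVneq z y; first by rewrite ezy.
    rewrite Pj // Fout //; first by rewrite /N0 /= -/(N0 l) Ninv.
      exact: ltnW.
    by rewrite leqnn subnn expn0 divn1 nzy.
Qed.
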